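(* Let $A$ be an antilinear operator on a complex $n$-dimensional space $W$ and let $\lambda>0$ be real. For integers $k\ge 0$ put $W_\lambda^{(k)}=\ker(A^2-\lambda^2I)^k$ and, for $k\ge1$, $W_\lambda^{(k)\pm}=\{x\in W:(A\mp\lambda I)(A^2-\lambda^2I)^{k-1}x=0\}$ (real subspaces of $W$ containing $W_\lambda^{(k-1)}$). Then for every positive integer $k$, as real vector spaces, $$W_\lambda^{(k)}/W_\lambda^{(k-1)}=W_\lambda^{(k)+}/W_\lambda^{(k-1)}\ \oplus\ W_\lambda^{(k)-}/W_\lambda^{(k-1)},$$ and moreover $W_\lambda^{(k)}/W_\lambda^{(k-1)}=\mathrm{span}_{\mathbb C}\bigl(W_\lambda^{(k)+}/W_\lambda^{(k-1)}\bigr)$.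
   Context: An antilinear operator satisfies $A(zv+w)=\bar z Av+Aw$; $A^2$ is then complex linear and commutes with $A$. Since $\lambda$ is real, $A\mp\lambda I$ is antilinear, so $W_\lambda^{(k)\pm}$ are real (not necessarily complex) subspaces. *)

(* Defs.v *)
From HB Require Import structures.
From mathcomp Require Import all_boot all_order all_algebra.
Set Implicit Arguments. Unset Strict Implicit. Unset Printing Implicit Defensive.
Import Order.TTheory GRing.Theory Num.Theory.
Local Open Scope ring_scope.

(* A complex field: numClosedFieldType C (e.g. algC); W = C^n as row vectors. *)

Definition antilinear (C : numClosedFieldType) (n : nat) (A : 'rV[C]_n -> 'rV[C]_n) :=
  forall (z : C) (v w : 'rV[C]_n), A (z *: v + w) = z^* *: A v + A w.

Definition sqShift (C : numClosedFieldType) (n : nat) (A : 'rV[C]_n -> 'rV[C]_n)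
  (l : C) (x : 'rV[C]_n) : 'rV[C]_n := A (A x) - (l ^+ 2) *: x.

Definition Wk (C : numClosedFieldType) (n : nat) (A : 'rV[C]_n -> 'rV[C]_n)
  (l : C) (k : nat) (x : 'rV[C]_n) : Prop := iter k (sqShift A l) x = 0.

Definition Wkplus (C : numClosedFieldType) (n : nat) (A : 'rV[C]_n -> 'rV[C]_n)
  (l : C) (k : nat) (x : 'rV[C]_n) : Prop :=
  let y := iter k.-1 (sqShift A l) x in A y - l *: y = 0.

Definition Wkminus (C : numClosedFieldType) (n : nat) (A : 'rV[C]_n -> 'rV[C]_n)
  (l : C) (k : nat) (x : 'rV[C]_n) : Prop :=
  let y := iter k.-1 (sqShift A l) x in A y + l *: y = 0.

(* Main.v *)
Require Import Defs.
From HB Require Import structures.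
From mathcomp Require Import all_boot all_order all_algebra.
Import Order.TTheory GRing.Theory Num.Theory.
Local Open Scope ring_scope.

Set Implicit Arguments.
Section H.
Lemma alD (C : numClosedFieldType) (n : nat) (A : 'rV[C]_n -> 'rV[C]_n) :
  antilinear A -> forall v w, A (v + w) = A v + A w.
Proof. by move=> hA v w; have := hA 1 v w; rewrite !scale1r rmorph1 scale1r. Qed.

Lemma al0 (C : numClosedFieldType) (n : nat) (A : 'rV[C]_n -> 'rV[C]_n) :
  antilinear A -> A 0 = 0.
Proof. by move=> hA; apply: (addrI (A 0)); rewrite addr0 -(alD hA) addr0. Qed.

Lemma alZ (C : numClosedFieldType) (n : nat) (A : 'rV[C]_n -> 'rV[C]_n) :
  antilinear A -> forall z v, A (z *: v) = z^* *: A v.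
Proof. by move=> hA z v; have := hA z v 0; rewrite !addr0 (al0 hA) addr0. Qed.

Lemma BL (C : numClosedFieldType) (n : nat) (A : 'rV[C]_n -> 'rV[C]_n) l :
  antilinear A -> forall j z v w,
  iter j (sqShift A l) (z *: v + w) = z *: iter j (sqShift A l) v + iter j (sqShift A l) w.
Proof.
move=> hA; elim=> [|j IH] z v w //=; rewrite IH /sqShift.
rewrite !(alD hA) !(alZ hA) conjCK.
by rewrite scalerBr scalerDr !scalerA [z * _]mulrC opprD addrACA.
Qed.

Lemma BD (C : numClosedFieldType) (n : nat) (A : 'rV[C]_n -> 'rV[C]_n) l :
  antilinear A -> forall j v w,
  iter j (sqShift A l) (v + w) = iter j (sqShift A l) v + iter j (sqShift A l) w.
Proof. by move=> hA j v w; have := BL l hA j 1 v w; rewrite !scale1r. Qed.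

Lemma BZ (C : numClosedFieldType) (n : nat) (A : 'rV[C]_n -> 'rV[C]_n) l :
  antilinear A -> forall j z v,
  iter j (sqShift A l) (z *: v) = z *: iter j (sqShift A l) v.
Proof.
move=> hA j z v; have := BL l hA j z v 0; rewrite !addr0 => ->.
suff -> : iter j (sqShift A l) 0 = 0 by rewrite addr0.
by elim: j => //= j ->; rewrite /sqShift !(al0 hA) scaler0 subr0.
Qed.

Lemma B0 (C : numClosedFieldType) (n : nat) (A : 'rV[C]_n -> 'rV[C]_n) l :
  antilinear A -> forall j, iter j (sqShift A l) 0 = 0.
Proof. by move=> hA; elim => //= j ->; rewrite /sqShift !(al0 hA) scaler0 subr0. Qed.

Lemma AB (C : numClosedFieldType) (n : nat) (A : 'rV[C]_n -> 'rV[C]_n) l :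
  antilinear A -> l \is Num.real -> forall j v,
  A (iter j (sqShift A l) v) = iter j (sqShift A l) (A v).
Proof.
move=> hA hl; elim=> [|j IH] v //=; rewrite -IH /sqShift.
rewrite (alD hA) -scaleN1r (alZ hA) rmorphN1 scaleN1r.
by rewrite (alZ hA) conj_Creal ?rpredX.
Qed.
End H.

Theorem mainTheorem4 (C : numClosedFieldType) (n : nat)
  (A : 'rV[C]_n -> 'rV[C]_n) (l : C) (k : nat) :
  antilinear A -> l \is Num.real -> 0 < l -> (0 < k)%N ->
  (* W^(k)/W^(k-1) = W^(k)+/W^(k-1) + W^(k)-/W^(k-1) *)
  [/\ (forall x, Wk A l k x <->
         exists y z, [/\ Wkplus A l k y, Wkminus A l k z & x = y + z]),
      (* the sum is direct: (W^(k)+/W^(k-1)) ∩ (W^(k)-/W^(k-1)) = 0 *)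
      (forall x, Wkplus A l k x -> Wkminus A l k x -> Wk A l k.-1 x) &
      (* W^(k)/W^(k-1) = span_C (W^(k)+/W^(k-1)) *)
      (forall x, Wk A l k x <->
         exists s : seq (C * 'rV[C]_n),
           (forall p, p \in s -> Wkplus A l k p.2) /\
           Wk A l k.-1 (x - \sum_(p <- s) p.1 *: p.2))].
Proof.
move=> hA hl l0; case: k => // m _.
rewrite /Wk /Wkplus /Wkminus /= -/(iter m.+1 _ _).
set B := iter m (sqShift A l).
have iterS : forall x, iter m.+1 (sqShift A l) x = sqShift A l (B x) by [].
have ln0 : l != 0 by rewrite gt_eqF.
have l2 : (2 * l) != 0 by rewrite mulf_neq0 // pnatr_eq0.
have cr : (2 * l)^-1^* = (2 * l)^-1.
  by rewrite conj_Creal // rpredV rpredM // rpred_nat.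
have Wp_k : forall y, A (B y) - l *: B y = 0 -> sqShift A l (B y) = 0.
  move=> y /eqP; rewrite subr_eq0 => /eqP h.
  by rewrite /sqShift h (alZ hA) conj_Creal // h scalerA -expr2 subrr.
have Wm_k : forall y, A (B y) + l *: B y = 0 -> sqShift A l (B y) = 0.
  move=> y /eqP; rewrite addr_eq0 => /eqP h.
  by rewrite /sqShift h -scaleNr (alZ hA) conj_Creal ?rpredN // h scaleNr scalerN opprK scalerA -expr2 subrr.
pose xp x := (2 * l)^-1 *: (A x + l *: x).
pose xm x := (2 * l)^-1 *: (l *: x - A x).
have xpm : forall x, x = xp x + xm x.
  move=> x; rewrite /xp /xm -scalerDr [A x + _]addrC addrACA subrr addr0.
  by rewrite -scalerDl scalerA -mulr2n -[l *+ 2]mulr_natl mulVf // scale1r.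
have Bxp : forall x, B (xp x) = (2 * l)^-1 *: (A (B x) + l *: B x).
  by move=> x; rewrite /xp /B BZ // BD // BZ // AB.
have Bxm : forall x, B (xm x) = (2 * l)^-1 *: (l *: B x - A (B x)).
  by move=> x; rewrite /xm /B BZ // BD // BZ // -scaleN1r BZ // AB // scaleN1r.
have hp : forall x, sqShift A l (B x) = 0 -> A (B (xp x)) - l *: B (xp x) = 0.
  move=> x; rewrite /sqShift => /eqP; rewrite subr_eq0 => /eqP h.
  rewrite Bxp (alZ hA) cr (alD hA) (alZ hA) conj_Creal // h.
  rewrite [l *: (_ *: _)]scalerA [l * _]mulrC -[(_^-1 * l) *: _]scalerA -scalerBr [l *: (_ + _)]scalerDr.
  by rewrite [l *: (l *: _)]scalerA -expr2 opprD addrA addrK subrr scaler0.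
have hm : forall x, sqShift A l (B x) = 0 -> A (B (xm x)) + l *: B (xm x) = 0.
  move=> x; rewrite /sqShift => /eqP; rewrite subr_eq0 => /eqP h.
  rewrite Bxm (alZ hA) cr (alD hA) -scaleN1r (alZ hA) (alZ hA) rmorphN1 conj_Creal // scaleN1r h scaleN1r.
  rewrite [l *: (_ *: _)]scalerA [l * _]mulrC -[(_^-1 * l) *: _]scalerA -scalerDr [l *: (_ - _)]scalerBr.
  by rewrite [l *: (l *: _)]scalerA -expr2 addrA subrK subrr scaler0.
split.
- move=> x; split.
    by move=> h; exists (xp x), (xm x); split => //; [apply: hp | apply: hm].
  case=> y [z [hy hz ->]].
  have SD : forall v w, sqShift A l (v + w) = sqShift A l v + sqShift A l w := BD l hA 1.
  by rewrite /B BD // -/B SD Wp_k // Wm_k // addr0.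
- move=> x /eqP; rewrite subr_eq0 => /eqP h; rewrite h -scalerDl => /eqP.
  rewrite scaler_eq0 => /orP [|/eqP //].
  by rewrite -mulr2n -mulr_natl mulf_eq0 pnatr_eq0 (negbTE ln0).
- move=> x; split.
    move=> h; exists [:: (1, xp x); ('i, - 'i *: xm x)]; split.
      move=> p; rewrite !inE => /orP [/eqP -> | /eqP ->] /=; first exact: hp.
      have /eqP := hm x h; rewrite addr_eq0 => /eqP h'.
      rewrite /B BZ // -/B (alZ hA) raddfN /= conjCi opprK h' scalerN !scalerA.
      by rewrite mulrN scaleNr opprK [l * _]mulrC addNr.
    rewrite big_cons big_cons big_nil /= addr0 scale1r scalerA mulrN mulCii opprK scale1r.
    by rewrite -xpm subrr /B B0.
  case=> s [hs h0].
  have -> : x = (x - \sum_(p <- s) p.1 *: p.2) + \sum_(p <- s) p.1 *: p.2 by rewrite subrK.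
  have SD : forall v w, sqShift A l (v + w) = sqShift A l v + sqShift A l w := BD l hA 1.
  rewrite /B BD // -/B SD h0.
  have -> : sqShift A l 0 = 0 by rewrite /sqShift !(al0 hA) scaler0 subr0.
  rewrite add0r; elim: s hs {h0} => [|p s IH] hs.
    by rewrite big_nil /B B0 // /sqShift !(al0 hA) scaler0 subr0.
  rewrite big_cons.
  have SZ : forall z v, sqShift A l (z *: v) = z *: sqShift A l v := BZ l hA 1.
  rewrite /B (BL l hA) -/B SD SZ Wp_k ?hs ?mem_head // scaler0 add0r.
  by apply: IH => q hq; apply: hs; rewrite inE hq orbT.
Qed.
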